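(* Let $R$ be a commutative ring, $\mathcal C$ an additive category that is $R$-linear, $\mathrm{Hom}$-finite and Krull–Schmidt, and $\mathbb E\colon\mathcal C^{\mathrm{op}}\times\mathcal C\to\mathsf{Ab}$ an $R$-bilinear biadditive functor. Then $\mathbb E\text{-}\mathrm{Ext}(\mathcal C)$ is also $R$-linear, $\mathrm{Hom}$-finite and Krull–Schmidt.
   Context: $\mathcal C$ is $R$-linear if each $\mathcal C(X,Y)$ is an $R$-module with $(\lambda g)f=\lambda(gf)=g(\lambda f)$; $\mathbb E$ is $R$-bilinear if each $\mathbb E(C,A)$ is an $R$-module and $\mathbb E(\lambda c,a)=\lambda\mathbb E(c,a)=\mathbb E(c,\lambda a)$. $\mathrm{Hom}$-finite: each $\mathcal C(X,Y)$ has finite length over $R$. Krull–Schmidt: every object is a finite direct sum of objects with local endomorphism rings. Write $a_*\alpha=\mathbb E(C,a)(\alpha)$, $c^*\beta=\mathbb E(c,A)(\beta)$. The category of extensions $\mathbb E\text{-}\mathrm{Ext}(\mathcal C)$ has objects all $\alpha\in\mathbb E(C,A)$; morphisms $\alpha\to\beta\in\mathbb E(D,B)$ are pairs $(a\colon A\to B,c\colon C\to D)$ with $a_*\alpha=c^*\beta$; composition and addition componentwise, $R$-action $\lambda(a,c)=(\lambda a,\lambda c)$. *)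

(* Defs.v *)
From HB Require Import structures.
From mathcomp Require Import all_boot all_algebra.
Set Implicit Arguments. Unset Strict Implicit. Unset Printing Implicit Defensive.
Import GRing.Theory.
Local Open Scope ring_scope.

Definition is_module (R : comPzRingType) (M : Type) (z : M) (add : M -> M -> M)
    (opp : M -> M) (sc : R -> M -> M) : Prop :=
  [/\ (forall x y w, add x (add y w) = add (add x y) w),
      (forall x y, add x y = add y x),
      (forall x, add z x = x),
      (forall x, add (opp x) x = z) &
      [/\ (forall r x y, sc r (add x y) = add (sc r x) (sc r y)),
          (forall r s x, sc (r + s) x = add (sc r x) (sc s x)),
          (forall r s x, sc (r * s) x = sc r (sc s x)) &
          (forall x, sc 1 x = x)]].

(* Submodules (as predicates) and finite length (existence of a composition series). *)
Definition is_submod (R : comPzRingType) (M : Type) (z : M) (add : M -> M -> M)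
    (opp : M -> M) (sc : R -> M -> M) (S : M -> Prop) : Prop :=
  [/\ S z, (forall x y, S x -> S y -> S (add x y)), (forall x, S x -> S (opp x)) &
      (forall r x, S x -> S (sc r x))].

Definition finite_length (R : comPzRingType) (M : Type) (z : M) (add : M -> M -> M)
    (opp : M -> M) (sc : R -> M -> M) : Prop :=
  exists (n : nat) (S : nat -> M -> Prop),
    [/\ (forall i, (i <= n)%N -> is_submod z add opp sc (S i)),
        (forall x, S 0%N x <-> x = z),
        (forall x, S n x) &
        (forall i, (i < n)%N ->
          [/\ (forall x, S i x -> S i.+1 x),
              (exists x, S i.+1 x /\ ~ S i x) &
              (forall T, is_submod z add opp sc T ->
                 (forall x, S i x -> T x) -> (forall x, T x -> S i.+1 x) ->
                 (forall x, T x <-> S i x) \/ (forall x, T x <-> S i.+1 x))])].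

Record RCatData (R : Type) := {
  Ob : Type;
  Hom : Ob -> Ob -> Type;
  idm : forall X, Hom X X;
  comp : forall X Y Z, Hom Y Z -> Hom X Y -> Hom X Z;
  hzero : forall X Y, Hom X Y;
  hadd : forall X Y, Hom X Y -> Hom X Y -> Hom X Y;
  hopp : forall X Y, Hom X Y -> Hom X Y;
  hscale : forall X Y, R -> Hom X Y -> Hom X Y }.
Arguments Ob {R} : rename. Arguments Hom {R C} : rename. Arguments idm {R C} : rename.
Arguments comp {R C X Y Z} : rename. Arguments hzero {R C X Y} : rename. Arguments hadd {R C X Y} : rename.
Arguments hopp {R C X Y} : rename. Arguments hscale {R C X Y} : rename.

Record IsRLinear (R : comPzRingType) (C : RCatData R) : Prop := {
  rl_mod : forall X Y : Ob C, is_module (@hzero _ C X Y) hadd hopp hscale;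
  rl_assoc : forall (X Y Z W : Ob C) (h : Hom Z W) (g : Hom Y Z) (f : Hom X Y),
      comp h (comp g f) = comp (comp h g) f;
  rl_idl : forall (X Y : Ob C) (f : Hom X Y), comp (idm Y) f = f;
  rl_idr : forall (X Y : Ob C) (f : Hom X Y), comp f (idm X) = f;
  rl_addl : forall (X Y Z : Ob C) (g1 g2 : Hom Y Z) (f : Hom X Y),
      comp (hadd g1 g2) f = hadd (comp g1 f) (comp g2 f);
  rl_addr : forall (X Y Z : Ob C) (g : Hom Y Z) (f1 f2 : Hom X Y),
      comp g (hadd f1 f2) = hadd (comp g f1) (comp g f2);
  rl_scl : forall (X Y Z : Ob C) (r : R) (g : Hom Y Z) (f : Hom X Y),
      comp (hscale r g) f = hscale r (comp g f);
  rl_scr : forall (X Y Z : Ob C) (r : R) (g : Hom Y Z) (f : Hom X Y),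
      comp g (hscale r f) = hscale r (comp g f) }.

Definition is_additive (R : Type) (C : RCatData R) : Prop :=
  (exists Z : Ob C, idm Z = hzero) /\
  (forall X Y : Ob C, exists (S : Ob C) (i1 : Hom X S) (i2 : Hom Y S)
      (p1 : Hom S X) (p2 : Hom S Y),
      [/\ comp p1 i1 = idm X, comp p2 i2 = idm Y, comp p1 i2 = hzero,
          comp p2 i1 = hzero & hadd (comp i1 p1) (comp i2 p2) = idm S]).

Definition HomFinite (R : comPzRingType) (C : RCatData R) : Prop :=
  forall X Y : Ob C, finite_length (@hzero _ C X Y) hadd hopp hscale.

Definition is_unit (R : Type) (C : RCatData R) (X : Ob C) (f : Hom X X) : Prop :=
  exists g : Hom X X, comp g f = idm X /\ comp f g = idm X.

Definition local_end (R : Type) (C : RCatData R) (X : Ob C) : Prop :=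
  [/\ idm X <> hzero,
      (forall f g : Hom X X, ~ is_unit f -> ~ is_unit g -> ~ is_unit (hadd f g)) &
      (forall f g : Hom X X, ~ is_unit f -> ~ is_unit (comp g f) /\ ~ is_unit (comp f g))].

Definition KrullSchmidt (R : Type) (C : RCatData R) : Prop :=
  forall X : Ob C, exists (n : nat) (Xs : 'I_n -> Ob C)
      (i : forall k, Hom (Xs k) X) (p : forall k, Hom X (Xs k)),
    [/\ (forall k, local_end (Xs k)),
        (forall k, comp (p k) (i k) = idm (Xs k)),
        (forall k l, k <> l -> comp (p k) (i l) = hzero) &
        \big[hadd/hzero]_(k < n) comp (i k) (p k) = idm X].

(* Data of a functor E : C^op x C -> Ab with R-module values: E C A, and
   Emap c a = E(c,a) : E C A -> E C' A' for c : C' -> C, a : A -> A'. *)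
Record ExtData (R : Type) (C : RCatData R) := {
  Ecar : Ob C -> Ob C -> Type;
  ezero : forall X Y, Ecar X Y;
  eadd : forall X Y, Ecar X Y -> Ecar X Y -> Ecar X Y;
  eopp : forall X Y, Ecar X Y -> Ecar X Y;
  escale : forall X Y, R -> Ecar X Y -> Ecar X Y;
  Emap : forall (C' C0 A A' : Ob C), Hom C' C0 -> Hom A A' -> Ecar C0 A -> Ecar C' A' }.
Arguments Ecar {R C} : rename. Arguments ezero {R C E X Y} : rename. Arguments eadd {R C E X Y} : rename.
Arguments eopp {R C E X Y} : rename. Arguments escale {R C E X Y} : rename.
Arguments Emap {R C E C' C0 A A'} : rename.

Record IsRBilinBifunctor (R : comPzRingType) (C : RCatData R) (E : ExtData C) : Prop := {
  bf_mod : forall X Y : Ob C, is_module (@ezero _ _ E X Y) eadd eopp escale;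
  bf_id : forall (X A : Ob C) (x : Ecar E X A), Emap (idm X) (idm A) x = x;
  bf_comp : forall (C0 C1 C2 A0 A1 A2 : Ob C) (c1 : Hom C1 C0) (c2 : Hom C2 C1)
      (a1 : Hom A0 A1) (a2 : Hom A1 A2) (x : Ecar E C0 A0),
      Emap (comp c1 c2) (comp a2 a1) x = Emap c2 a2 (Emap c1 a1 x);
  bf_hom : forall (C' C0 A A' : Ob C) (c : Hom C' C0) (a : Hom A A') (x y : Ecar E C0 A),
      Emap c a (eadd x y) = eadd (Emap c a x) (Emap c a y);
  bf_addl : forall (C' C0 A A' : Ob C) (c1 c2 : Hom C' C0) (a : Hom A A') (x : Ecar E C0 A),
      Emap (hadd c1 c2) a x = eadd (Emap c1 a x) (Emap c2 a x);
  bf_addr : forall (C' C0 A A' : Ob C) (c : Hom C' C0) (a1 a2 : Hom A A') (x : Ecar E C0 A),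
      Emap c (hadd a1 a2) x = eadd (Emap c a1 x) (Emap c a2 x);
  bf_scl : forall (C' C0 A A' : Ob C) (r : R) (c : Hom C' C0) (a : Hom A A') (x : Ecar E C0 A),
      Emap (hscale r c) a x = escale r (Emap c a x);
  bf_scr : forall (C' C0 A A' : Ob C) (r : R) (c : Hom C' C0) (a : Hom A A') (x : Ecar E C0 A),
      Emap c (hscale r a) x = escale r (Emap c a x) }.

Lemma addmap_0 (M N : Type) (zM : M) (aM : M -> M -> M) (zN : N) (aN : N -> N -> N)
  (oN : N -> N) (f : M -> N) :
  aM zM zM = zM -> (forall x y w, aN x (aN y w) = aN (aN x y) w) ->
  (forall x, aN zN x = x) -> (forall x, aN (oN x) x = zN) ->
  (forall x y, f (aM x y) = aN (f x) (f y)) -> f zM = zN.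
Proof.
move=> HzM Ha Hz Hi Hf.
have H2 : aN (f zM) (f zM) = f zM by rewrite -Hf HzM.
by rewrite -(Hi (f zM)) -{3}H2 Ha Hi Hz.
Qed.

Lemma addmap_N (M N : Type) (zM : M) (aM : M -> M -> M) (oM : M -> M)
  (zN : N) (aN : N -> N -> N) (oN : N -> N) (f : M -> N) :
  aM zM zM = zM -> (forall x, aM (oM x) x = zM) ->
  (forall x y w, aN x (aN y w) = aN (aN x y) w) -> (forall x y, aN x y = aN y x) ->
  (forall x, aN zN x = x) -> (forall x, aN (oN x) x = zN) ->
  (forall x y, f (aM x y) = aN (f x) (f y)) -> forall x, f (oM x) = oN (f x).
Proof.
move=> HzM HiM Ha Hc Hz Hi Hf x.
have f0 : f zM = zN by apply: (addmap_0 (aM:=aM) (oN:=oN)).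
have H1 : aN (f (oM x)) (f x) = zN by rewrite -Hf HiM.
rewrite -[f (oM x)]Hz -(Hi (f x)) -Ha (Hc (f x)) H1.
by rewrite Hc Hz.
Qed.

Record ExtOb (R : Type) (C : RCatData R) (E : ExtData C) := mkExtOb {
  xC : Ob C; xA : Ob C; xal : Ecar E xC xA }.
Arguments xC {R C E} : rename. Arguments xA {R C E} : rename. Arguments xal {R C E} : rename.

(* morphisms alpha -> beta: pairs (a, c) with a_* alpha = c^* beta *)
Definition ExtHom (R : Type) (C : RCatData R) (E : ExtData C) (X Y : ExtOb E) :=
  {p : Hom (xA X) (xA Y) * Hom (xC X) (xC Y) |
     Emap (idm (xC X)) p.1 (xal X) = Emap p.2 (idm (xA Y)) (xal Y)}.

Section ExtCatConstr.
Variables (R : comPzRingType) (C : RCatData R) (E : ExtData C).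
Hypotheses (HC : IsRLinear C) (HE : IsRBilinBifunctor E).

Lemma Emap_r0 (C' C0 A A' : Ob C) (c : Hom C' C0) (x : Ecar E C0 A) :
  Emap c (@hzero _ C A A') x = ezero.
Proof.
have [Ha _ Hz Hi _] := bf_mod HE C' A'.
have [_ _ HzM _ _] := rl_mod HC A A'.
exact: (addmap_0 (aM := hadd) (oN := eopp) (HzM hzero) Ha Hz Hi
          (fun a b => bf_addr HE c a b x)).
Qed.

Lemma Emap_l0 (C' C0 A A' : Ob C) (a : Hom A A') (x : Ecar E C0 A) :
  Emap (@hzero _ C C' C0) a x = ezero.
Proof.
have [Ha _ Hz Hi _] := bf_mod HE C' A'.
have [_ _ HzM _ _] := rl_mod HC C' C0.
exact: (addmap_0 (f := fun c => Emap c a x) (aM := hadd) (oN := eopp) (HzM hzero) Ha Hz Hi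
          (fun c d => bf_addl HE c d a x)).
Qed.

Lemma Emap_rN (C' C0 A A' : Ob C) (c : Hom C' C0) (a : Hom A A') (x : Ecar E C0 A) :
  Emap c (hopp a) x = eopp (Emap c a x).
Proof.
have [Ha Hc Hz Hi _] := bf_mod HE C' A'.
have [_ _ HzM HiM _] := rl_mod HC A A'.
exact: (addmap_N (f := fun a => Emap c a x) (HzM hzero) HiM Ha Hc Hz Hi
          (fun a b => bf_addr HE c a b x)).
Qed.

Lemma Emap_lN (C' C0 A A' : Ob C) (c : Hom C' C0) (a : Hom A A') (x : Ecar E C0 A) :
  Emap (hopp c) a x = eopp (Emap c a x).
Proof.
have [Ha Hc Hz Hi _] := bf_mod HE C' A'.
have [_ _ HzM HiM _] := rl_mod HC C' C0.
exact: (addmap_N (f := fun c => Emap c a x) (HzM hzero) HiM Ha Hc Hz Hi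
          (fun c d => bf_addl HE c d a x)).
Qed.

Definition ext_idm (X : ExtOb E) : ExtHom X X :=
  exist _ (idm (xA X), idm (xC X)) erefl.

Lemma ext_comp_closed (X Y Z : ExtOb E) (g : ExtHom Y Z) (f : ExtHom X Y) :
  Emap (idm (xC X)) (comp (sval g).1 (sval f).1) (xal X)
  = Emap (comp (sval g).2 (sval f).2) (idm (xA Z)) (xal Z).
Proof.
case: g f => [[a' c'] /= H2] [[a c] /= H1] /=.
transitivity (Emap (comp (idm (xC X)) (idm (xC X))) (comp a' a) (xal X)).
  by rewrite rl_idl.
rewrite bf_comp // H1 -bf_comp //.
transitivity (Emap (comp (idm (xC Y)) c) (comp (idm (xA Z)) a') (xal Y)).
  by rewrite !rl_idl // !rl_idr.
rewrite bf_comp // H2 -bf_comp //.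
by rewrite rl_idl.
Qed.

Definition ext_comp (X Y Z : ExtOb E) (g : ExtHom Y Z) (f : ExtHom X Y) : ExtHom X Z :=
  exist _ (comp (sval g).1 (sval f).1, comp (sval g).2 (sval f).2) (ext_comp_closed g f).

Lemma ext_zero_closed (X Y : ExtOb E) :
  Emap (idm (xC X)) (@hzero _ C (xA X) (xA Y)) (xal X)
  = Emap (@hzero _ C (xC X) (xC Y)) (idm (xA Y)) (xal Y).
Proof. by rewrite Emap_r0 Emap_l0. Qed.

Definition ext_zero (X Y : ExtOb E) : ExtHom X Y :=
  exist _ (hzero, hzero) (ext_zero_closed X Y).

Lemma ext_add_closed (X Y : ExtOb E) (f g : ExtHom X Y) :
  Emap (idm (xC X)) (hadd (sval f).1 (sval g).1) (xal X)
  = Emap (hadd (sval f).2 (sval g).2) (idm (xA Y)) (xal Y).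
Proof.
case: f g => [[a c] /= H1] [[a' c'] /= H2] /=.
by rewrite bf_addr // bf_addl // H1 H2.
Qed.

Definition ext_add (X Y : ExtOb E) (f g : ExtHom X Y) : ExtHom X Y :=
  exist _ (hadd (sval f).1 (sval g).1, hadd (sval f).2 (sval g).2) (ext_add_closed f g).

Lemma ext_opp_closed (X Y : ExtOb E) (f : ExtHom X Y) :
  Emap (idm (xC X)) (hopp (sval f).1) (xal X)
  = Emap (hopp (sval f).2) (idm (xA Y)) (xal Y).
Proof.
case: f => [[a c] /= H1] /=.
by rewrite Emap_rN Emap_lN H1.
Qed.

Definition ext_opp (X Y : ExtOb E) (f : ExtHom X Y) : ExtHom X Y :=
  exist _ (hopp (sval f).1, hopp (sval f).2) (ext_opp_closed f).

Lemma ext_scale_closed (X Y : ExtOb E) (r : R) (f : ExtHom X Y) :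
  Emap (idm (xC X)) (hscale r (sval f).1) (xal X)
  = Emap (hscale r (sval f).2) (idm (xA Y)) (xal Y).
Proof.
case: f => [[a c] /= H1] /=.
by rewrite bf_scr // bf_scl // H1.
Qed.

Definition ext_scale (X Y : ExtOb E) (r : R) (f : ExtHom X Y) : ExtHom X Y :=
  exist _ (hscale r (sval f).1, hscale r (sval f).2) (ext_scale_closed r f).

Definition ExtCat : RCatData R :=
  {| Ob := ExtOb E; Hom := @ExtHom R C E; idm := ext_idm; comp := ext_comp;
     hzero := ext_zero; hadd := ext_add; hopp := ext_opp; hscale := ext_scale |}.

End ExtCatConstr.

(* Main.v *)
From HB Require Import structures.
From Pilot Require Import Defs.
From mathcomp Require Import all_boot all_algebra zify.
From Stdlib Require Import Classical ProofIrrelevance.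
Import Pilot.Defs.
Set Implicit Arguments. Unset Strict Implicit. Unset Printing Implicit Defensive.

Section ModTheory.
Variable R : comPzRingType.

Record Mod := MkMod { mT :> Type; mz : mT; madd : mT -> mT -> mT; mopp : mT -> mT;
  msc : R -> mT -> mT; mH : is_module mz madd mopp msc }.

Section M1.
Variable M : Mod.
Implicit Types x y w : M.

Lemma maddA x y w : madd x (madd y w) = madd (madd x y) w.
Proof. by case: (mH M). Qed.
Lemma maddC x y : madd x y = madd y x.
Proof. by case: (mH M). Qed.
Lemma madd0l x : madd (mz M) x = x.
Proof. by case: (mH M). Qed.
Lemma maddNl x : madd (mopp x) x = mz M.
Proof. by case: (mH M). Qed.
Lemma madd0r x : madd x (mz M) = x.
Proof. by rewrite maddC madd0l. Qed.
Lemma maddNr x : madd x (mopp x) = mz M.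
Proof. by rewrite maddC maddNl. Qed.
Lemma mscD r x y : msc r (madd x y) = madd (msc r x) (msc r y).
Proof. by case: (mH M) => _ _ _ _ []. Qed.
Lemma maddKl x y : madd (mopp x) (madd x y) = y.
Proof. by rewrite maddA maddNl madd0l. Qed.
Lemma maddKr x y : madd x (madd (mopp x) y) = y.
Proof. by rewrite maddA maddNr madd0l. Qed.
Lemma madd_sub x y w : madd x y = w -> y = madd (mopp x) w.
Proof. by move=> <-; rewrite maddKl. Qed.
Lemma mz2 : madd (mz M) (mz M) = mz M.
Proof. exact: madd0l. Qed.
Lemma maddACA (a b c d : M) : madd (madd a b) (madd c d) = madd (madd a c) (madd b d).
Proof.
by rewrite -!maddA; congr madd; rewrite !maddA [madd b c]maddC.
Qed.
Lemma moppD x y : mopp (madd x y) = madd (mopp x) (mopp y).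
Proof.
have H : madd (madd x y) (madd (mopp x) (mopp y)) = mz M.
  by rewrite maddACA maddNr maddNr madd0l.
by rewrite (madd_sub H) madd0r.
Qed.
Lemma msc0 r : msc r (mz M) = mz M.
Proof.
have H : madd (msc r (mz M)) (msc r (mz M)) = msc r (mz M) by rewrite -mscD madd0l.
by rewrite (madd_sub H) maddNl.
Qed.
Lemma mscN r x : msc r (mopp x) = mopp (msc r x).
Proof.
have H : madd (msc r x) (msc r (mopp x)) = mz M by rewrite -mscD maddNr msc0.
by rewrite (madd_sub H) madd0r.
Qed.
End M1.

Definition ishom (N M : Mod) (f : N -> M) :=
  (forall x y, f (madd x y) = madd (f x) (f y)) /\ (forall r x, f (msc r x) = msc r (f x)).

Lemma hom0 (N M : Mod) (f : N -> M) : ishom f -> f (mz N) = mz M.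
Proof.
case=> Ha _.
exact: (addmap_0 (f:=f) (aM:=@madd N) (aN:=@madd M) (oN:=@mopp M) (mz2 N) (@maddA M) (@madd0l M) (@maddNl M) Ha).
Qed.
Lemma homN (N M : Mod) (f : N -> M) : ishom f -> forall x, f (mopp x) = mopp (f x).
Proof.
move=> hf x; have H : madd (f x) (f (mopp x)) = mz M.
  by rewrite -hf.1 maddNr hom0.
by rewrite (madd_sub H) madd0r.
Qed.

Definition submod (M : Mod) (S : M -> Prop) := is_submod (mz M) (@madd M) (@mopp M) (@msc M) S.
Definition sub (T : Type) (A B : T -> Prop) := forall x, A x -> B x.
Definition eqv (T : Type) (A B : T -> Prop) := forall x, A x <-> B x.
Definition step (M : Mod) (A B : M -> Prop) :=
  sub A B /\ forall T, submod T -> sub A T -> sub T B -> eqv T A \/ eqv T B.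
Definition chain (M : Mod) (P Q : M -> Prop) (m : nat) (S : nat -> M -> Prop) :=
  [/\ forall i, (i <= m)%N -> submod (S i), eqv (S 0%N) P, eqv (S m) Q &
      forall i, (i < m)%N -> step (S i) (S i.+1)].

Lemma step_eqv_l (M : Mod) (A A' B : M -> Prop) : eqv A A' -> step A B -> step A' B.
Proof.
move=> e [sAB H]; split=> [x /e/sAB //|T sT sAT sTB].
have [] := H T sT (fun x ax => sAT x ((e x).1 ax)) sTB => h; [left|right] => // x.
by rewrite h e.
Qed.

Lemma chain_eqv (M : Mod) P Q P' Q' m S : eqv P P' -> eqv Q Q' -> @chain M P Q m S -> chain P' Q' m S.
Proof. by move=> eP eQ [h1 h2 h3 h4]; split=> // x; rewrite ?h2 ?h3. Qed.

Definition eq0 (M : Mod) := fun x : M => x = mz M.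
Definition allM (M : Mod) := fun x : M => True.

Lemma fl_chain (M : Mod) : finite_length (mz M) (@madd M) (@mopp M) (@msc M) ->
  exists m S, @chain M (@eq0 M) (@allM M) m S.
Proof.
case=> n [S [h1 h2 h3 h4]]; exists n, S; split => //.
move=> i /h4 [a b c].
split => [x|T sT sa sb]; first exact: a.
by have [] := c T sT sa sb; [left|right].
Qed.

Lemma drop_step (M : Mod) P Q m S i : @chain M P Q m.+1 S -> (i <= m)%N -> sub (S i.+1) (S i) ->
  chain P Q m (fun j => S (if (j <= i)%N then j else j.+1)).
Proof.
case=> h1 h2 h3 h4 hi hs.
have eqi : eqv (S i.+1) (S i).
  move=> x; split; first exact: hs.
  by have [] := h4 i (leq_ltn_trans hi (ltnSn m)) => + _; apply.
split.
- by move=> j hj /=; case: ifP => _; apply: h1; lia.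
- by [].
- case: ifP => hm /=; last exact: h3.
  have im : i = m by apply/eqP; rewrite eqn_leq hi hm.
  subst i; move=> x; rewrite -h3; split; last exact: hs.
  by have [] := h4 m (ltnSn m) => + _; apply.
- move=> j hj /=.
  case: (ltngtP j i) => hji /=.
  + apply: h4; lia.
  + apply: h4; lia.
  + subst j; apply: (step_eqv_l (A := S i.+1)) => //.
    apply: h4; lia.
Qed.

Lemma chain_fl (M : Mod) m S : @chain M (@eq0 M) (@allM M) m S ->
  finite_length (mz M) (@madd M) (@mopp M) (@msc M).
Proof.
elim: m S => [|m IH] S hc.
  case: hc => h1 h2 h3 h4; exists 0%N, S; split => //.
  by move=> x; rewrite h3.
case: (classic (exists i, (i <= m)%N /\ sub (S i.+1) (S i))) => [[i [hi hs]]|hn].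
  exact: (IH _ (drop_step hc hi hs)).
case: hc => h1 h2 h3 h4; exists m.+1, S; split => //.
  by move=> x; rewrite h3.
move=> i hi; have [sA H] := h4 i hi; split => //.
  apply: NNPP => hx; apply: hn; exists i; split => // x Sx.
  by apply: NNPP => nx; apply: hx; exists x.
Qed.

Lemma pre_submod (N M : Mod) (f : N -> M) (K : N -> Prop) (A : M -> Prop) :
  ishom f -> submod K -> submod A -> submod (fun x => K x /\ A (f x)).
Proof.
move=> hf [k0 kA kN kS] [a0 aA aN aS]; split.
- by split => //; rewrite hom0.
- by move=> x y [? ?] [? ?]; split; [apply: kA|rewrite hf.1; apply: aA].
- by move=> x [? ?]; split; [apply: kN|rewrite homN //; apply: aN].
- by move=> r x [? ?]; split; [apply: kS|rewrite hf.2; apply: aS].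
Qed.

Lemma chain_pull (N M : Mod) (f : N -> M) (K : N -> Prop) P Q m S :
  ishom f -> submod K -> @chain M P Q m S ->
  chain (fun x => K x /\ P (f x)) (fun x => K x /\ Q (f x)) m (fun i x => K x /\ S i (f x)).
Proof.
move=> hf hK [h1 h2 h3 h4]; split.
- by move=> i hi; apply: pre_submod => //; apply: h1.
- by move=> x /=; rewrite h2.
- by move=> x /=; rewrite h3.
move=> i hi; have [sAB H] := h4 i hi.
have [s0 sA sN sS] := h1 i (ltnW hi).
have [u0 uA uN uS] := h1 i.+1 hi.
have [k0 kA kN kS] := hK.
split=> [x [kx sx]|T sT sAT sTB]; first by split => //; apply: sAB.
have [t0 tA tN tS] := sT.
pose T' := fun y => exists t s, [/\ T t, S i s & y = madd (f t) s].
have sT' : submod T'.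
  split.
  - by exists (mz N), (mz M); split => //; rewrite (hom0 hf) madd0l.
  - move=> _ _ [t1 [s1 [? ? ->]]] [t2 [s2 [? ? ->]]].
    exists (madd t1 t2), (madd s1 s2); split; [exact: tA|exact: sA|].
    by rewrite hf.1 maddACA.
  - move=> _ [t [s [? ? ->]]]; exists (mopp t), (mopp s); split; [exact: tN|exact: sN|].
    by rewrite (homN hf) moppD.
  - move=> r _ [t [s [? ? ->]]]; exists (msc r t), (msc r s); split; [exact: tS|exact: sS|].
    by rewrite mscD hf.2.
have h1' : sub (S i) T'.
  by move=> s si; exists (mz N), s; split => //; rewrite (hom0 hf) madd0l.
have h2' : sub T' (S i.+1).
  move=> _ [t [s [tt si ->]]]; apply: uA; first by case: (sTB t tt).
  exact: sAB.
case: (H T' sT' h1' h2') => e; [left|right] => x; split.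
- move=> tx; split; first by case: (sTB x tx).
  by apply/e; exists x, (mz M); split => //; rewrite madd0r.
- exact: sAT.
- exact: sTB.
- move=> [kx ux]; have [t [s [tt si fx]]] := (e (f x)).2 ux.
  have kt : K t by case: (sTB t tt).
  have hy : T (madd x (mopp t)).
    apply: sAT; split; first by apply: kA => //; apply: kN.
    by rewrite hf.1 (homN hf) fx maddC maddKl.
  have -> : x = madd (madd x (mopp t)) t by rewrite -maddA maddNl madd0r.
  exact: tA.
Qed.

Lemma pull_triv (N M : Mod) (f : N -> M) (K : N -> Prop) Q m S :
  ishom f -> submod K -> @chain M (@eq0 M) Q m S ->
  (exists y, Q y /\ forall x, K x -> f x <> y) ->
  exists i, (i < m)%N /\ sub (fun x => K x /\ S i.+1 (f x)) (fun x => K x /\ S i (f x)).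
Proof.
move=> hf hK [h1 h2 h3 h4] [y [qy ny]].
apply: NNPP => hn.
have [k0 kA kN kS] := hK.
suff H : forall i, (i <= m)%N -> forall y, S i y -> exists x, K x /\ f x = y.
  by have [x [kx fx]] := H m (leqnn m) y ((h3 y).2 qy); apply: (ny x kx).
elim=> [_|i IH hi] y0.
  by move/h2 => ->; exists (mz N); split => //; rewrite (hom0 hf).
have [x0 [kx0 [s1 ns]]] : exists x0, K x0 /\ S i.+1 (f x0) /\ ~ S i (f x0).
  apply: NNPP => hx; apply: hn; exists i; split => // x [kx sx]; split => //.
  by apply: NNPP => nx; apply: hx; exists x.
have [sAB H] := h4 i hi.
have [u0 uA uN uS] := h1 i.+1 hi.
pose W := fun y => exists x, [/\ K x, S i.+1 (f x) & y = f x].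
have sW : submod W.
  split.
  - by exists (mz N); rewrite (hom0 hf).
  - move=> _ _ [a [? ? ->]] [b [? ? ->]]; exists (madd a b); rewrite hf.1; split => //.
      exact: kA.
    exact: uA.
  - move=> _ [a [? ? ->]]; exists (mopp a); rewrite (homN hf); split => //.
      exact: kN.
    exact: uN.
  - move=> r _ [a [? ? ->]]; exists (msc r a); rewrite hf.2; split => //.
      exact: kS.
    exact: uS.
have sSW : sub (S i) W.
  move=> z sz; have [x [kx fx]] := IH (ltnW hi) z sz.
  by exists x; split => //; apply: sAB; rewrite fx.
have sWS : sub W (S i.+1) by move=> _ [x [? ? ->]].
case: (H W sW sSW sWS) => e.
  by exfalso; apply: ns; apply/e; exists x0.
by move/e => [x [kx _ ->]]; exists x.
Qed.

Lemma chain_cat (M : Mod) P Q W m n S T : @chain M P Q m S -> chain Q W n T ->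
  chain P W (m + n) (fun i => if (i <= m)%N then S i else T (i - m)%N).
Proof.
move=> [h1 h2 h3 h4] [g1 g2 g3 g4]; split.
- by move=> i hi /=; case: ifP => hm; [apply: h1|apply: g1; lia].
- by [].
- case: ifP => hm.
    have n0 : n = 0%N by lia.
    by subst n; move=> x; rewrite addn0 h3 -g2 g3.
  by rewrite addKn.
- move=> i hi /=; case: (ltngtP i m) => him /=.
  + apply: h4; lia.
  + have -> : (i.+1 - m = (i - m).+1)%N by lia.
    apply: g4; lia.
  + subst i; rewrite subSnn; apply: (step_eqv_l (A := T 0%N)).
      by move=> x; rewrite g2 h3.
    apply: g4; lia.
Qed.

Definition slen (M : Mod) (P : M -> Prop) (m : nat) := exists S, @chain M (@eq0 M) P m S.

Lemma slen_sub (M : Mod) (P Q : M -> Prop) m : submod P -> sub P Q -> slen Q m ->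
  slen P m /\ ((exists y, Q y /\ ~ P y) -> exists m', (m' < m)%N /\ slen P m').
Proof.
move=> sP sPQ [S hc].
have hid : ishom (fun x : M => x) by [].
have hc' := chain_pull hid sP hc.
have e0 : eqv (fun x => P x /\ @eq0 M x) (@eq0 M).
  by move=> x; split => [[]//|->]; split => //; case: sP.
have e1 : eqv (fun x => P x /\ Q x) P.
  by move=> x; split => [[]//|px]; split => //; apply: sPQ.
split; first by exists (fun i x => P x /\ S i x); exact: chain_eqv e0 e1 hc'.
move=> [y [qy npy]].
have [i [hi hs]] := pull_triv hid sP hc (ex_intro _ y (conj qy (fun x px e => npy (eq_ind _ P px _ e)))).
case: m hc hc' hi hs => // m hc hc' hi hs.
exists m; split => //; exists (fun j x => P x /\ S (if (j <= i)%N then j else j.+1) x).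
exact: (chain_eqv e0 e1 (drop_step hc' (i := i) (ltac:(lia)) hs)).
Qed.

Lemma inj_len (N M : Mod) (f : N -> M) m : ishom f -> (forall x, f x = mz M -> x = mz N) ->
  slen (@allM M) m ->
  slen (@allM N) m /\ ((exists y, forall x, f x <> y) -> exists m', (m' < m)%N /\ slen (@allM N) m').
Proof.
move=> hf finj [S hc].
have hK : submod (@allM N) by [].
have hc' := chain_pull hf hK hc.
have e0 : eqv (fun x => allM x /\ @eq0 M (f x)) (@eq0 N).
  by move=> x; split => [[_ /finj]//|->]; split => //; rewrite /eq0 (hom0 hf).
have e1 : eqv (fun x => allM x /\ allM (f x)) (@allM N) by [].
split; first by eexists; exact: chain_eqv e0 e1 hc'.
move=> [y ny].
have [i [hi hs]] := pull_triv hf hK hc (ex_intro _ y (conj I (fun x _ => ny x))).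
case: m hc hc' hi hs => // m hc hc' hi hs.
exists m; split => //; eexists.
exact: (chain_eqv e0 e1 (drop_step hc' (i := i) (ltac:(lia)) hs)).
Qed.

Lemma dcc (M : Mod) L (D : nat -> M -> Prop) : slen (@allM M) L ->
  (forall k, submod (D k)) -> (forall k, sub (D k.+1) (D k)) ->
  exists n, sub (D n) (D n.+1).
Proof.
move=> hL sD dD; apply: NNPP => hn.
have strict : forall k, exists y, D k y /\ ~ D k.+1 y.
  move=> k; apply: NNPP => hk; apply: hn; exists k => x dx.
  by apply: NNPP => nx; apply: hk; exists x.
suff H : forall k, exists m, (m + k <= L)%N /\ slen (D k) m.
  by have [m [hm _]] := H L.+1; lia.
elim=> [|k [m [hm hs]]].
  by exists L; split; [lia| exact: (slen_sub (sD 0%N) (fun _ _ => I) hL).1].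
have [y [dy ndy]] := strict k.
have [_ H2] := slen_sub (sD k.+1) (@dD k) hs.
have [m' [hm' hs']] := H2 (ex_intro _ y (conj dy ndy)).
by exists m'; split => //; lia.
Qed.

End ModTheory.

Section Cat.
Variables (R : comPzRingType) (D : RCatData R) (HD : IsRLinear D).

Definition HomMod (X Y : Ob D) : Mod R := @MkMod R (Hom X Y) hzero hadd hopp hscale (rl_mod HD X Y).

Section HL.
Variables X Y : Ob D.
Implicit Types x y w : Hom X Y.
Lemma hA x y w : hadd x (hadd y w) = hadd (hadd x y) w. Proof. exact: (@maddA _ (HomMod X Y)). Qed.
Lemma hC x y : hadd x y = hadd y x. Proof. exact: (@maddC _ (HomMod X Y)). Qed.
Lemma h0l x : hadd hzero x = x. Proof. exact: (@madd0l _ (HomMod X Y)). Qed.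
Lemma h0r x : hadd x hzero = x. Proof. exact: (@madd0r _ (HomMod X Y)). Qed.
Lemma hNl x : hadd (hopp x) x = hzero. Proof. exact: (@maddNl _ (HomMod X Y)). Qed.
Lemma hNr x : hadd x (hopp x) = hzero. Proof. exact: (@maddNr _ (HomMod X Y)). Qed.
Lemma hKl x y : hadd (hopp x) (hadd x y) = y. Proof. exact: (@maddKl _ (HomMod X Y)). Qed.
Lemma hKr x y : hadd x (hadd (hopp x) y) = y. Proof. exact: (@maddKr _ (HomMod X Y)). Qed.
Lemma hoppD x y : hopp (hadd x y) = hadd (hopp x) (hopp y). Proof. exact: (@moppD _ (HomMod X Y)). Qed.
Lemma hsc0 r : hscale r (@hzero _ D X Y) = hzero. Proof. exact: (@msc0 _ (HomMod X Y)). Qed.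
Lemma hACA (a b c d : Hom X Y) : hadd (hadd a b) (hadd c d) = hadd (hadd a c) (hadd b d).
Proof. exact: (@maddACA _ (HomMod X Y)). Qed.
Lemma hscD r x y : hscale r (hadd x y) = hadd (hscale r x) (hscale r y).
Proof. by case: (rl_mod HD X Y) => _ _ _ _ []. Qed.
Lemma hscDr r s x : hscale (r + s)%R x = hadd (hscale r x) (hscale s x).
Proof. by case: (rl_mod HD X Y) => _ _ _ _ []. Qed.
Lemma hscM r s x : hscale (r * s)%R x = hscale r (hscale s x).
Proof. by case: (rl_mod HD X Y) => _ _ _ _ []. Qed.
Lemma hsc1 x : hscale 1%R x = x.
Proof. by case: (rl_mod HD X Y) => _ _ _ _ []. Qed.
Lemma hopp0 : hopp (@hzero _ D X Y) = hzero.
Proof. by rewrite -[hopp _]h0r hNl. Qed.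
Lemma hoppK x : hopp (hopp x) = x.
Proof. by rewrite -[hopp (hopp x)]h0r -(hNl x) hA hNl h0l. Qed.
Lemma hadd_cancel x y w : hadd x y = hadd x w -> y = w.
Proof. by move=> e; rewrite -(hKl x y) e hKl. Qed.
End HL.

Lemma compL_hom (X Y Z : Ob D) (f : Hom X Y) :
  ishom (M := HomMod X Z) (N := HomMod Y Z) (fun g => comp g f).
Proof. by split => [g h|r g] /=; [rewrite rl_addl|rewrite rl_scl]. Qed.
Lemma compR_hom (X Y Z : Ob D) (g : Hom Y Z) :
  ishom (M := HomMod X Z) (N := HomMod X Y) (fun f => comp g f).
Proof. by split => [f h|r f] /=; [rewrite rl_addr|rewrite rl_scr]. Qed.

Lemma c0l (X Y Z : Ob D) (f : Hom X Y) : comp (@hzero _ D Y Z) f = hzero.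
Proof. exact: (hom0 (compL_hom Z f)). Qed.
Lemma c0r (X Y Z : Ob D) (g : Hom Y Z) : comp g (@hzero _ D X Y) = hzero.
Proof. exact: (hom0 (compR_hom X g)). Qed.
Lemma cNl (X Y Z : Ob D) (g : Hom Y Z) (f : Hom X Y) : comp (hopp g) f = hopp (comp g f).
Proof. exact: (homN (compL_hom Z f)). Qed.
Lemma cNr (X Y Z : Ob D) (g : Hom Y Z) (f : Hom X Y) : comp g (hopp f) = hopp (comp g f).
Proof. exact: (homN (compR_hom X g)). Qed.

End Cat.
Arguments c0l {R D} HD {X Y Z} f.
Arguments c0r {R D} HD {X Y Z} g.
Arguments cNl {R D} HD {X Y Z} g f.
Arguments cNr {R D} HD {X Y Z} g f.

Section ExtLin.
Variables (R : comPzRingType) (C : RCatData R) (E : ExtData C).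
Hypotheses (HC : IsRLinear C) (HE : IsRBilinBifunctor E).

Lemma ext_eq (X Y : ExtOb E) (f g : ExtHom X Y) :
  (sval f).1 = (sval g).1 -> (sval f).2 = (sval g).2 -> f = g.
Proof.
case: f g => [[a c] pf] [[a' c'] pg] /= e1 e2; subst a' c'.
by rewrite (proof_irrelevance _ pf pg).
Qed.

Lemma ExtCat_lin : IsRLinear (ExtCat HC HE).
Proof.
have [m1 m2 m3 m4 m5 m6 m7 m8] := HC.
split.
- move=> X Y; split.
  + by move=> x y w; apply: ext_eq => /=; rewrite hA.
  + by move=> x y; apply: ext_eq => /=; rewrite hC.
  + by move=> x; apply: ext_eq => /=; rewrite h0l.
  + by move=> x; apply: ext_eq => /=; rewrite hNl.
  + split.
    * by move=> r x y; apply: ext_eq => /=; rewrite !hscD.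
    * by move=> r s x; apply: ext_eq => /=; rewrite !hscDr.
    * by move=> r s x; apply: ext_eq => /=; rewrite !hscM.
    * by move=> x; apply: ext_eq => /=; rewrite !hsc1.
- by move=> X Y Z W h g f; apply: ext_eq => /=; rewrite m2.
- by move=> X Y f; apply: ext_eq => /=; rewrite m3.
- by move=> X Y f; apply: ext_eq => /=; rewrite m4.
- by move=> X Y Z g1 g2 f; apply: ext_eq => /=; rewrite m5.
- by move=> X Y Z g f1 f2; apply: ext_eq => /=; rewrite m6.
- by move=> X Y Z r g f; apply: ext_eq => /=; rewrite m7.
- by move=> X Y Z r g f; apply: ext_eq => /=; rewrite m8.
Qed.

Lemma ExtCat_fin : HomFinite C -> HomFinite (ExtCat HC HE).
Proof.
move=> HF X Y.
pose N := HomMod ExtCat_lin X Y.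
pose M1 := HomMod HC (xA X) (xA Y).
pose M2 := HomMod HC (xC X) (xC Y).
pose p1 := fun f : N => ((sval f).1 : M1).
pose p2 := fun f : N => ((sval f).2 : M2).
have hp1 : ishom p1 by [].
have hp2 : ishom p2 by [].
have [m1 [S1 c1]] := @fl_chain _ M1 (HF (xA X) (xA Y)).
have [m2 [S2 c2]] := @fl_chain _ M2 (HF (xC X) (xC Y)).
pose K := fun f : N => p2 f = hzero.
have sK : submod K.
  split.
  - by [].
  - by move=> x y; rewrite /K /p2 /= => -> ->; rewrite h0l.
  - by move=> x; rewrite /K /p2 /= => ->; rewrite hopp0.
  - by move=> r x; rewrite /K /p2 /= => ->; rewrite hsc0.
have d1 := chain_pull hp1 sK c1.
have sA : submod (@allM _ N) by [].
have d2 := chain_pull hp2 sA c2.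
have e0 : eqv (fun x => K x /\ @eq0 _ M1 (p1 x)) (@eq0 _ N).
  move=> x; split => [[k1 k2]|->] //.
  by apply: ext_eq.
have e1 : eqv (fun x => K x /\ @allM _ M1 (p1 x)) K by move=> x; split => [[]|].
have e2 : eqv (fun x => @allM _ N x /\ @eq0 _ M2 (p2 x)) K by move=> x; split => [[]|].
have e3 : eqv (fun x => @allM _ N x /\ @allM _ M2 (p2 x)) (@allM _ N) by [].
have := chain_cat (chain_eqv e0 e1 d1) (chain_eqv e2 e3 d2).
exact: chain_fl.
Qed.

End ExtLin.

Section Split.
Variables (R : comPzRingType) (D : RCatData R) (HD : IsRLinear D).

Local Notation hA := (hA HD). Local Notation hC := (hC HD). Local Notation h0l := (h0l HD).
Local Notation h0r := (h0r HD). Local Notation hNl := (hNl HD). Local Notation hNr := (hNr HD).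
Local Notation hKl := (hKl HD). Local Notation hKr := (hKr HD). Local Notation hoppD := (hoppD HD).
Local Notation hsc0 := (hsc0 HD). Local Notation hscD := (hscD HD). Local Notation hACA := (hACA HD).
Local Notation hopp0 := (hopp0 HD). Local Notation hoppK := (hoppK HD).
Local Notation hadd_cancel := (hadd_cancel HD).
Local Notation c0l := (c0l HD). Local Notation c0r := (c0r HD).
Local Notation cNl := (cNl HD). Local Notation cNr := (cNr HD).

Lemma cA (X Y Z W : Ob D) (h : Hom Z W) (g : Hom Y Z) (f : Hom X Y) :
  comp h (comp g f) = comp (comp h g) f.
Proof. exact: rl_assoc. Qed.
Lemma c1l (X Y : Ob D) (f : Hom X Y) : comp (idm Y) f = f. Proof. exact: rl_idl. Qed.
Lemma c1r (X Y : Ob D) (f : Hom X Y) : comp f (idm X) = f. Proof. exact: rl_idr. Qed.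
Lemma cDl (X Y Z : Ob D) (g1 g2 : Hom Y Z) (f : Hom X Y) :
  comp (hadd g1 g2) f = hadd (comp g1 f) (comp g2 f). Proof. exact: rl_addl. Qed.
Lemma cDr (X Y Z : Ob D) (g : Hom Y Z) (f1 f2 : Hom X Y) :
  comp g (hadd f1 f2) = hadd (comp g f1) (comp g f2). Proof. exact: rl_addr. Qed.
Lemma hsub (X Y : Ob D) (x y w : Hom X Y) : hadd x y = w -> y = hadd w (hopp x).
Proof. by move=> <-; rewrite hC hKl. Qed.

Definition splits (X : Ob D) (e : Hom X X) :=
  exists (Y : Ob D) (i : Hom Y X) (p : Hom X Y), comp p i = idm Y /\ comp i p = e.

Lemma mvn_split (X Y : Ob D) (e : Hom X X) (g : Hom Y Y) (a : Hom Y X) (b : Hom X Y) :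
  comp a b = e -> comp b a = g -> comp e e = e -> splits g -> splits e.
Proof.
move=> ab ba ee [Z [c [d [dc cd]]]].
exists Z, (comp a c), (comp d b); split.
  have -> : comp (comp d b) (comp a c) = comp d (comp (comp b a) c) by rewrite !cA.
  rewrite ba -cd.
  have -> : comp d (comp (comp c d) c) = comp (comp d c) (comp d c) by rewrite !cA.
  by rewrite dc c1l.
have -> : comp (comp a c) (comp d b) = comp a (comp (comp c d) b) by rewrite !cA.
rewrite cd -ba.
have -> : comp a (comp (comp b a) b) = comp (comp a b) (comp a b) by rewrite !cA.
by rewrite ab ee.
Qed.

Lemma c4 (X1 X2 X3 X4 X5 : Ob D) (a : Hom X4 X5) (b : Hom X3 X4) (c : Hom X2 X3) (d : Hom X1 X2) :
  comp (comp a b) (comp c d) = comp a (comp (comp b c) d).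
Proof. by rewrite !cA. Qed.

Lemma sum_split (Hadd : is_additive D) (X : Ob D) (e1 e2 : Hom X X) :
  splits e1 -> splits e2 -> comp e1 e2 = hzero -> comp e2 e1 = hzero -> splits (hadd e1 e2).
Proof.
move=> [Y1 [i1 [p1 [pi1 ip1]]]] [Y2 [i2 [p2 [pi2 ip2]]]] o12 o21.
have [S [j1 [j2 [q1 [q2 [qj1 qj2 q1j2 q2j1 jq]]]]]] := Hadd.2 Y1 Y2.
have p1i2 : comp p1 i2 = hzero.
  have -> : comp p1 i2 = comp p1 (comp (comp (comp i1 p1) (comp i2 p2)) i2).
    by rewrite !cA pi1 c1l -cA pi2 c1r.
  by rewrite ip1 ip2 o12 c0l c0r.
have p2i1 : comp p2 i1 = hzero.
  have -> : comp p2 i1 = comp p2 (comp (comp (comp i2 p2) (comp i1 p1)) i1).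
    by rewrite !cA pi2 c1l -cA pi1 c1r.
  by rewrite ip1 ip2 o21 c0l c0r.
exists S, (hadd (comp i1 q1) (comp i2 q2)), (hadd (comp j1 p1) (comp j2 p2)); split.
  rewrite cDl !cDr !c4 pi1 pi2 p1i2 p2i1 !c1l !c0l !c0r h0r h0l.
  by rewrite -jq.
rewrite cDl !cDr !c4 qj1 qj2 q1j2 q2j1 !c1l !c0l !c0r h0r h0l.
by rewrite ip1 ip2.
Qed.

Lemma idem_dec (X Y0 : Ob D) (e : Hom X X) (i' : Hom Y0 X) (p' : Hom X Y0) :
  comp e e = e -> comp p' i' = idm Y0 -> comp e i' = i' -> comp p' e = p' ->
  [/\ comp (comp i' p') (hadd e (hopp (comp i' p'))) = hzero,
      comp (hadd e (hopp (comp i' p'))) (comp i' p') = hzero,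
      comp (hadd e (hopp (comp i' p'))) (hadd e (hopp (comp i' p'))) = hadd e (hopp (comp i' p')) &
      hadd (comp i' p') (hadd e (hopp (comp i' p'))) = e].
Proof.
move=> ee pi ei pe.
have e'e' : comp (comp i' p') (comp i' p') = comp i' p' by rewrite c4 pi c1l.
have ee' : comp e (comp i' p') = comp i' p' by rewrite cA ei.
have e'e : comp (comp i' p') e = comp i' p' by rewrite -cA pe.
have o1 : comp (comp i' p') (hadd e (hopp (comp i' p'))) = hzero by rewrite cDr cNr e'e e'e' hNr.
have o2 : comp (hadd e (hopp (comp i' p'))) (comp i' p') = hzero by rewrite cDl cNl ee' e'e' hNr.
split => //.
  rewrite [in LHS]cDl cNl o1 hopp0 h0r.
  by rewrite cDr cNr ee ee'.
by rewrite [hadd e _]hC hKr.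
Qed.

Lemma split_ind (Hadd : is_additive D) n : forall (X : Ob D) (Xs : 'I_n -> Ob D)
  (i : forall k, Hom (Xs k) X) (p : forall k, Hom X (Xs k)),
  (forall k, local_end (Xs k)) -> (forall k, comp (p k) (i k) = idm (Xs k)) ->
  (forall k l, k <> l -> comp (p k) (i l) = hzero) ->
  comp (\big[hadd/hzero]_(k < n) comp (i k) (p k)) (\big[hadd/hzero]_(k < n) comp (i k) (p k))
    = \big[hadd/hzero]_(k < n) comp (i k) (p k) ->
  forall e : Hom X X, comp e e = e -> comp e (\big[hadd/hzero]_(k < n) comp (i k) (p k)) = e ->
  comp (\big[hadd/hzero]_(k < n) comp (i k) (p k)) e = e -> splits e.
Proof.
elim: n => [|n IH] X Xs i p hloc hpi horth.
  rewrite big_ord0 => _ e ee eQ Qe.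
  have e0 : e = hzero by rewrite -eQ c0r.
  have [Z hZ] := Hadd.1.
  by exists Z, hzero, hzero; split; rewrite c0l.
rewrite big_ord_recl.
remember (\big[hadd/hzero]_(k < n) comp (i (lift ord0 k)) (p (lift ord0 k))) as Q1 eqn:eQ1.
move=> QQ e ee eQ Qe.
have orth : forall k, comp (p (lift ord0 k)) (i ord0) = hzero /\ comp (p ord0) (i (lift ord0 k)) = hzero.
  move=> k; have ne : lift ord0 k <> ord0 by move=> E; move: (neq_lift ord0 k); rewrite E eqxx.
  by split; apply: horth => // /esym.
have Q1i0 : comp Q1 (i ord0) = hzero.
  rewrite eQ1; elim/big_rec: _ => [|k x _ IHx]; first exact: c0l.
  by rewrite cDl IHx h0r -cA (orth k).1 c0r.
have p0Q1 : comp (p ord0) Q1 = hzero.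
  rewrite eQ1; elim/big_rec: _ => [|k x _ IHx]; first exact: c0r.
  by rewrite cDr IHx h0r cA (orth k).2 c0l.
have E0E0 : comp (comp (i ord0) (p ord0)) (comp (i ord0) (p ord0)) = comp (i ord0) (p ord0).
  by rewrite c4 hpi c1l.
have E0Q1 : comp (comp (i ord0) (p ord0)) Q1 = hzero by rewrite -cA p0Q1 c0r.
have Q1E0 : comp Q1 (comp (i ord0) (p ord0)) = hzero by rewrite cA Q1i0 c0l.
have Q1Q1 : comp Q1 Q1 = Q1.
  move: QQ; rewrite cDl !cDr E0E0 E0Q1 Q1E0 h0r h0l.
  exact: hadd_cancel.
have IH' : forall e, comp e e = e -> comp e Q1 = e -> comp Q1 e = e -> splits e.
  rewrite eQ1; apply: (IH X (fun k => Xs (lift ord0 k)) (fun k => i (lift ord0 k)) (fun k => p (lift ord0 k))).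
  - by move=> k; apply: hloc.
  - by move=> k; apply: hpi.
  - by move=> k l kl; apply: horth => /lift_inj.
  - by rewrite -eQ1.
have [nz addc mulc] := hloc ord0.
have : is_unit (comp (p ord0) (comp e (i ord0))) \/
       is_unit (hadd (idm _) (hopp (comp (p ord0) (comp e (i ord0))))).
  apply: NNPP => H.
  have nu1 : ~ is_unit (comp (p ord0) (comp e (i ord0))) by move=> h; apply: H; left.
  have nu2 : ~ is_unit (hadd (idm _) (hopp (comp (p ord0) (comp e (i ord0))))).
    by move=> h; apply: H; right.
  apply: (addc _ _ nu1 nu2).
  rewrite [hadd (idm _) _]hC hKr; exists (idm _); split; exact: c1l.
case => [[v [vu uv]] | [t [t1 t2]]].
- pose i' := comp e (i ord0). pose p' := comp v (comp (p ord0) e).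
  have pi' : comp p' i' = idm _.
    by rewrite /p' /i' -!cA [comp e (comp e _)]cA ee.
  have ei' : comp e i' = i' by rewrite /i' cA ee.
  have p'e : comp p' e = p' by rewrite /p' -!cA ee.
  have [o1 o2 hh he] := idem_dec ee pi' ei' p'e.
  move: o1 o2 hh he.
  remember (hadd e (hopp (comp i' p'))) as h eqn:eh => o1 o2 hh he.
  have hi0 : comp h (i ord0) = hzero.
    rewrite eh cDl cNl.
    have -> : comp (comp i' p') (i ord0) = comp i' (comp v (comp (p ord0) (comp e (i ord0)))).
      by rewrite /p' !cA.
    by rewrite vu c1r /i' hNr.
  have hQ : comp h (hadd (comp (i ord0) (p ord0)) Q1) = h.
    rewrite [in LHS]eh cDl cNl eQ.
    have -> : comp (comp i' p') (hadd (comp (i ord0) (p ord0)) Q1)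
            = comp i' (comp v (comp (p ord0) (comp e (hadd (comp (i ord0) (p ord0)) Q1)))).
      by rewrite /p' !cA.
    by rewrite eQ eh.
  have hQ1 : comp h Q1 = h.
    by move: hQ; rewrite cDr cA hi0 c0l h0l.
  have sf1 : splits (comp Q1 h).
    apply: IH'.
    - by rewrite c4 hQ1 hh.
    - by rewrite -cA hQ1.
    - by rewrite cA Q1Q1.
  have sh : splits h.
    apply: (mvn_split (a := h) (b := comp Q1 h)) => //.
    - by rewrite cA hQ1 hh.
    - by rewrite -cA hh.
  rewrite -he; apply: sum_split => //.
  by exists (Xs ord0), i', p'.
- pose a := comp e (i ord0). pose b := comp (p ord0) e.
  pose u := comp (p ord0) (comp e (i ord0)).
  have ba : comp b a = u by rewrite /a /b c4 ee.
  have ea : comp e a = a by rewrite /a cA ee.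
  have be : comp b e = b by rewrite /b -cA ee.
  have tL : t = hadd (idm _) (comp t u).
    move: t1; rewrite cDr c1r cNr hC => /hsub E.
    by rewrite {1}E hoppK.
  have tR : t = hadd (idm _) (comp u t).
    move: t2; rewrite cDl c1l cNl hC => /hsub E.
    by rewrite {1}E hoppK.
  have eE0e : comp e (comp (comp (i ord0) (p ord0)) e) = comp a b by rewrite /a /b !cA.
  clearbody a b u; clear t1 t2.
  have atb : comp a (comp t b) = hadd (comp a b) (comp a (comp u (comp t b))).
    by rewrite {1}tR cDl c1l cDr -cA.
  have atb' : comp a (comp t b) = hadd (comp a b) (comp a (comp t (comp u b))).
    by rewrite {1}tL cDl c1l cDr -cA.
  pose x := hadd e (hopp (comp a b)).
  pose y := hadd e (comp a (comp t b)).
  have ey : comp e y = y by rewrite /y cDr ee cA ea.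
  have ye : comp y e = y by rewrite /y cDl ee -!cA be.
  have xy : comp x y = e.
    rewrite /x cDl cNl ey -cA.
    have -> : comp b y = hadd b (comp u (comp t b)) by rewrite /y cDr be cA ba.
    by rewrite cDr /y atb -hA hNr h0r.
  have yx : comp y x = e.
    rewrite /x cDr cNr ye cA.
    have -> : comp y a = hadd a (comp a (comp t u)) by rewrite /y cDl ea -!cA ba.
    by rewrite cDl -!cA /y atb' -hA hNr h0r.
  have xQ : comp e (comp Q1 e) = x.
    have : comp e (comp (hadd (comp (i ord0) (p ord0)) Q1) e) = e by rewrite Qe ee.
    rewrite cDl cDr.
    rewrite eE0e.
    by move/hsub.
  have yQy : comp y (comp Q1 y) = y.
    transitivity (comp (comp y e) (comp Q1 (comp e y))); first by rewrite ye ey.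
    transitivity (comp y (comp (comp e (comp Q1 e)) y)); first by rewrite !cA.
    by rewrite xQ cA yx ey.
  have sg : splits (comp Q1 (comp y Q1)).
    apply: IH'.
    - transitivity (comp Q1 (comp (comp y (comp (comp Q1 Q1) y)) Q1)); first by rewrite !cA.
      by rewrite Q1Q1 yQy.
    - by rewrite -!cA Q1Q1.
    - by rewrite cA Q1Q1.
  apply: (mvn_split (a := comp e Q1) (b := comp Q1 y) _ _ ee sg).
  + transitivity (comp (comp e (comp Q1 e)) y); last by rewrite xQ xy.
    by rewrite c4 Q1Q1 -{1}ey !cA.
  + by rewrite c4 ye.
Qed.

End Split.

Lemma ks_split (R : comPzRingType) (D : RCatData R) (HD : IsRLinear D) (Hadd : is_additive D)
  (HK : KrullSchmidt D) (X : Ob D) (e : Hom X X) : comp e e = e -> splits e.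
Proof.
move=> ee.
have [n [Xs [i [p [hloc hpi horth hsum]]]]] := HK X.
have := split_ind HD Hadd hloc hpi horth; rewrite hsum; apply.
- exact: rl_idl.
- exact: ee.
- exact: rl_idr.
- exact: rl_idl.
Qed.

Section ExtSplit.
Variables (R : comPzRingType) (C : RCatData R) (E : ExtData C).
Hypotheses (HC : IsRLinear C) (HE : IsRBilinBifunctor E).
Hypothesis HsC : forall (X : Ob C) (e : Hom X X), comp e e = e -> splits e.

Lemma ext_split_aux (C0 A0 : Ob C) (al : Ecar E C0 A0) (eA : Hom A0 A0) (eC : Hom C0 C0)
  (pf : Emap (idm C0) eA al = Emap eC (idm A0) al) :
  comp eA eA = eA -> comp eC eC = eC ->
  splits (D := ExtCat HC HE) (exist _ (eA, eC) pf : ExtHom (mkExtOb al) (mkExtOb al)).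
Proof.
move=> eeA eeC.
have [YA [iA [pA [piA ipA]]]] := HsC eeA.
have [YC [iC [pC [piC ipC]]]] := HsC eeC.
pose al1 := Emap iC pA al.
pose X1 := mkExtOb al1.
have Hi : Emap (idm YC) iA al1 = Emap iC (idm A0) al.
  rewrite /al1 -(bf_comp HE) (rl_idr HC) ipA.
  transitivity (Emap iC (idm A0) (Emap (idm C0) eA al)).
    by rewrite -(bf_comp HE) ?(rl_idl HC) ?(rl_idr HC).
  rewrite pf -(bf_comp HE) (rl_idl HC).
  by rewrite -ipC -(rl_assoc HC) piC (rl_idr HC).
have Hp : Emap (idm C0) pA al = Emap pC (idm YA) al1.
  rewrite /al1 -(bf_comp HE) (rl_idl HC) ipC.
  transitivity (Emap (idm C0) pA (Emap eC (idm A0) al)); last first.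
    by rewrite -(bf_comp HE) ?(rl_idl HC) ?(rl_idr HC).
  rewrite -pf -(bf_comp HE) (rl_idl HC).
  by rewrite -ipA (rl_assoc HC) piA (rl_idl HC).
exists X1, (exist _ (iA, iC) Hi : ExtHom X1 (mkExtOb al)),
  (exist _ (pA, pC) Hp : ExtHom (mkExtOb al) X1); split.
  by apply: ext_eq => /=.
by apply: ext_eq => /=.
Qed.

Lemma ext_split (X : ExtOb E) (e : ExtHom X X) :
  comp (C := ExtCat HC HE) e e = e -> splits (D := ExtCat HC HE) e.
Proof.
case: X e => C0 A0 al [[eA eC] pf] ee.
apply: ext_split_aux.
  by move: ee => /(congr1 (fun f => (sval f).1)).
by move: ee => /(congr1 (fun f => (sval f).2)).
Qed.

End ExtSplit.

Section Fit.
Variables (R : comPzRingType) (D : RCatData R) (HD : IsRLinear D).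

Local Notation hA := (hA HD). Local Notation hC := (hC HD). Local Notation h0l := (h0l HD).
Local Notation h0r := (h0r HD). Local Notation hNl := (hNl HD). Local Notation hNr := (hNr HD).
Local Notation hKl := (hKl HD). Local Notation hKr := (hKr HD). Local Notation hoppD := (hoppD HD).
Local Notation hsc0 := (hsc0 HD). Local Notation hscD := (hscD HD). Local Notation hACA := (hACA HD).
Local Notation hopp0 := (hopp0 HD). Local Notation hoppK := (hoppK HD).
Local Notation hadd_cancel := (hadd_cancel HD).
Local Notation c0l := (c0l HD). Local Notation c0r := (c0r HD).
Local Notation cNl := (cNl HD). Local Notation cNr := (cNr HD).

Local Notation cA := (cA HD). Local Notation c1l := (c1l HD). Local Notation c1r := (c1r HD).
Local Notation cDl := (cDl HD). Local Notation cDr := (cDr HD). Local Notation c4 := (c4 HD).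
Local Notation hsub := (hsub HD).

Fixpoint fpow (X : Ob D) (f : Hom X X) (k : nat) : Hom X X :=
  if k is k'.+1 then comp f (fpow f k') else idm X.

Lemma fpowD (X : Ob D) (f : Hom X X) a b : fpow f (a + b) = comp (fpow f a) (fpow f b).
Proof. by elim: a => [|a IH] /=; [rewrite c1l|rewrite IH cA]. Qed.

Lemma fpowS' (X : Ob D) (f : Hom X X) k : fpow f k.+1 = comp (fpow f k) f.
Proof. by rewrite -addn1 fpowD /= c1r. Qed.

Lemma fpowC (X : Ob D) (f : Hom X X) k : comp f (fpow f k) = comp (fpow f k) f.
Proof. by rewrite -fpowS'. Qed.

Lemma linv_nil (X : Ob D) (a f : Hom X X) n : comp a f = idm X -> fpow f n = hzero -> idm X = hzero.
Proof.
move=> af fn.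
have H : forall k, comp (fpow a k) (fpow f k) = idm X.
  elim=> [|k IH]; first exact: c1l.
  by rewrite fpowS' /= c4 af c1l IH.
by rewrite -(H n) fn c0r.
Qed.

Lemma rinv_nil (X : Ob D) (f b : Hom X X) n : comp f b = idm X -> fpow f n = hzero -> idm X = hzero.
Proof.
move=> fb fn.
have H : forall k, comp (fpow f k) (fpow b k) = idm X.
  elim=> [|k IH]; first exact: c1l.
  by rewrite fpowS' /= c4 fb c1l IH.
by rewrite -(H n) fn c0l.
Qed.

Definition fnilp (X : Ob D) (f : Hom X X) := exists n, fpow f n = hzero.

Fixpoint geo (X : Ob D) (p : Hom X X) (k : nat) : Hom X X :=
  if k is k'.+1 then hadd (idm X) (comp p (geo p k')) else hzero.

Lemma geoP (X : Ob D) (p : Hom X X) k :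
  comp (hadd (idm X) (hopp p)) (geo p k) = hadd (idm X) (hopp (fpow p k)).
Proof.
elim: k => [|k IH] /=; first by rewrite c0r hNr.
have com : comp (hadd (idm X) (hopp p)) p = comp p (hadd (idm X) (hopp p)).
  by rewrite cDl cDr cNl cNr c1l c1r.
rewrite cDr c1r cA com -cA IH cDr c1r cNr.
by rewrite hA -[hadd (hadd _ (hopp p)) p]hA hNl h0r.
Qed.

Lemma local_of (X : Ob D) : idm X <> hzero ->
  (forall f : Hom X X, is_unit f \/ fnilp f) -> local_end X.
Proof.
move=> nz dich.
have H3 : forall f g : Hom X X, ~ is_unit f -> ~ is_unit (comp g f) /\ ~ is_unit (comp f g).
  move=> f g nf; have [//|[n fn]] := dich f.
  split.
    move=> [w [wgf _]]; apply: nz; apply: (linv_nil (a := comp w g)) fn.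
    by rewrite -cA.
  move=> [w [_ fgw]]; apply: nz; apply: (rinv_nil (b := comp g w)) fn.
  by rewrite cA.
split => // f g nf ng [w [ws sw]].
have nwf : ~ is_unit (comp w f) by have [] := H3 f w nf.
have nwg : ~ is_unit (comp w g) by have [] := H3 g w ng.
have [//|[n pn]] := dich (comp w f).
have eq1 : hadd (comp w f) (comp w g) = idm X by rewrite -cDr.
have qe : comp w g = hadd (idm X) (hopp (comp w f)).
  by rewrite -eq1 hC hKl.
apply: nwg; exists (geo (comp w f) n).
(* need two-sided inverse; use right inverse and commutation *)
have r : comp (comp w g) (geo (comp w f) n) = idm X by rewrite qe geoP pn hopp0 h0r.
have comm : comp (geo (comp w f) n) (comp w g) = comp (comp w g) (geo (comp w f) n).
  have com : comp (hadd (idm X) (hopp (comp w f))) (comp w f)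
           = comp (comp w f) (hadd (idm X) (hopp (comp w f))).
    by rewrite cDl cDr cNl cNr c1l c1r.
  rewrite qe; elim: (n) => [|k IH] /=; first by rewrite c0l c0r.
  rewrite [LHS]cDl c1l -cA IH.
  rewrite [RHS]cDr [in RHS]c1r; congr hadd.
  by rewrite cA -com -cA.
by split => //; rewrite comm.
Qed.

Lemma fitting (X : Ob D) L (hL : slen (@allM _ (HomMod HD X X)) L) (f : Hom X X) :
  is_unit f \/ fnilp f \/ exists e : Hom X X, [/\ comp e e = e, e <> hzero & e <> idm X].
Proof.
pose M := HomMod HD X X.
pose DR := fun k (y : M) => exists g, y = comp (fpow f k) g.
pose DL := fun k (y : M) => exists g, y = comp g (fpow f k).
have sDR : forall k, submod (DR k).
  move=> k; split.
  - by exists hzero; rewrite c0r.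
  - by move=> _ _ [g1 ->] [g2 ->]; exists (hadd g1 g2); rewrite cDr.
  - by move=> _ [g ->]; exists (hopp g); rewrite cNr.
  - by move=> r _ [g ->]; exists (hscale r g); rewrite (rl_scr HD).
have sDL : forall k, submod (DL k).
  move=> k; split.
  - by exists hzero; rewrite c0l.
  - by move=> _ _ [g1 ->] [g2 ->]; exists (hadd g1 g2); rewrite cDl.
  - by move=> _ [g ->]; exists (hopp g); rewrite cNl.
  - by move=> r _ [g ->]; exists (hscale r g); rewrite (rl_scl HD).
have dDR : forall k, sub (DR k.+1) (DR k).
  by move=> k _ [g ->]; exists (comp f g); rewrite fpowS' -cA.
have dDL : forall k, sub (DL k.+1) (DL k).
  by move=> k _ [g ->]; exists (comp g f); rewrite /= cA.
have [n hn] := dcc hL sDR dDR.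
have [m hm] := dcc hL sDL dDL.
have [g1 fn1] : exists g1, fpow f n = comp (fpow f n.+1) g1.
  by apply: hn; exists (idm X); rewrite c1r.
have [h1 fm1] : exists h1, fpow f m = comp h1 (fpow f m.+1).
  by apply: hm; exists (idm X); rewrite c1l.
pose N := (n + m).+1.
have xe : fpow f N = comp (comp f (fpow f N)) g1.
  have := erefl (fpow f ((N - n) + n)).
  rewrite {2}fpowD fn1 cA -fpowD addnS /= subnK //.
  by rewrite /N; lia.
have xe' : fpow f N = comp h1 (comp (fpow f N) f).
  have := erefl (fpow f (m + (N - m))).
  rewrite {2}fpowD fm1 -cA -fpowD addSn fpowS' subnKC //.
  by rewrite /N; lia.
have xr : forall k, fpow f N = comp (comp (fpow f k) (fpow f N)) (fpow g1 k).
  elim=> [|k IH]; first by rewrite /= c1l c1r.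
  rewrite {1}IH {1}xe fpowS' /=.
  by rewrite !cA.
have xl : forall k, fpow f N = comp (fpow h1 k) (comp (fpow f N) (fpow f k)).
  elim=> [|k IH]; first by rewrite /= c1l c1r.
  rewrite {1}IH {1}xe' fpowS' /=.
  by rewrite !cA.
have xN1 : fpow f N = comp f (fpow f (n + m)) by [].
have xN2 : fpow f N = comp (fpow f (n + m)) f by rewrite /N fpowS'.
move: (xr N) (xl N) xN1 xN2 => {xr xl xe xe'}.
move: (fpow g1 N) (fpow h1 N) => G H.
move Ex: (fpow f N) => x xr xl xN1 xN2.
have xe_ : comp x (comp x G) = x by rewrite cA -xr.
have eH : comp x G = comp H x.
  by rewrite {1}xl -!cA [comp x (comp x G)]cA -xr.
have ex : comp (comp x G) x = x by rewrite eH -cA -xl.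
have ee : comp (comp x G) (comp x G) = comp x G by rewrite cA ex.
case: (classic (comp x G = hzero)) => e0.
  right; left; exists N; rewrite Ex -ex e0 c0l //.
case: (classic (comp x G = idm X)) => e1; last first.
  by right; right; exists (comp x G).
left; exists (comp (fpow f (n + m)) G).
have r : comp f (comp (fpow f (n + m)) G) = idm X by rewrite cA -xN1.
have l : comp (comp H (fpow f (n + m))) f = idm X by rewrite -cA -xN2 -eH.
split => //.
have <- : comp H (fpow f (n + m)) = comp (fpow f (n + m)) G.
  by rewrite -[LHS]c1r -r cA l c1l.
exact: l.
Qed.

End Fit.

Section Dec.
Variables (R : comPzRingType) (D : RCatData R) (HD : IsRLinear D).

Local Notation hA := (hA HD). Local Notation hC := (hC HD). Local Notation h0l := (h0l HD).
Local Notation h0r := (h0r HD). Local Notation hNl := (hNl HD). Local Notation hNr := (hNr HD).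
Local Notation hKl := (hKl HD). Local Notation hKr := (hKr HD). Local Notation hoppD := (hoppD HD).
Local Notation hsc0 := (hsc0 HD). Local Notation hscD := (hscD HD). Local Notation hACA := (hACA HD).
Local Notation hopp0 := (hopp0 HD). Local Notation hoppK := (hoppK HD).
Local Notation hadd_cancel := (hadd_cancel HD).
Local Notation c0l := (c0l HD). Local Notation c0r := (c0r HD).
Local Notation cNl := (cNl HD). Local Notation cNr := (cNr HD).

Local Notation cA := (cA HD). Local Notation c1l := (c1l HD). Local Notation c1r := (c1r HD).
Local Notation cDl := (cDl HD). Local Notation cDr := (cDr HD). Local Notation c4 := (c4 HD).

Definition dec (X : Ob D) := exists (n : nat) (Xs : 'I_n -> Ob D)
      (i : forall k, Hom (Xs k) X) (p : forall k, Hom X (Xs k)),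
    [/\ (forall k, local_end (Xs k)),
        (forall k, comp (p k) (i k) = idm (Xs k)),
        (forall k l, k <> l -> comp (p k) (i l) = hzero) &
        \big[hadd/hzero]_(k < n) comp (i k) (p k) = idm X].

Lemma dec_zero (X : Ob D) : idm X = hzero -> dec X.
Proof.
move=> z; exists 0%N, (fun _ => X), (fun _ => hzero), (fun _ => hzero); split.
- by case.
- by case.
- by case.
- by rewrite big_ord0.
Qed.

Lemma dec_local (X : Ob D) : local_end X -> dec X.
Proof.
move=> hl; exists 1%N, (fun _ => X), (fun _ => idm X), (fun _ => idm X); split => //.
- by move=> k; rewrite c1l.
- by move=> k l; rewrite (ord1 k) (ord1 l).
- by rewrite big_ord_recl big_ord0 c1l h0r.
Qed.

Lemma big_split_h (X Y : Ob D) n1 n2 (F : 'I_(n1 + n2) -> Hom X Y) :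
  \big[hadd/hzero]_(k < n1 + n2) F k =
  hadd (\big[hadd/hzero]_(k < n1) F (lshift n2 k)) (\big[hadd/hzero]_(k < n2) F (rshift n1 k)).
Proof.
elim: n1 F => [|n1 IH] F.
  rewrite big_ord0 h0l; apply: eq_bigr => k _; congr F; exact: val_inj.
change (\big[hadd/hzero]_(k < (n1 + n2).+1) F k =
  hadd (\big[hadd/hzero]_(k < n1.+1) F (lshift n2 k)) (\big[hadd/hzero]_(k < n2) F (rshift n1.+1 k))).
rewrite big_ord_recl (IH (fun k => F (lift ord0 k))) big_ord_recl hA.
congr hadd; first congr hadd.
- by congr F; apply: val_inj.
- by apply: eq_bigr => k _; congr F; apply: val_inj.
- by apply: eq_bigr => k _; congr F; apply: val_inj.
Qed.

Lemma dec_sum (X Y1 Y2 : Ob D) (i1 : Hom Y1 X) (p1 : Hom X Y1) (i2 : Hom Y2 X) (p2 : Hom X Y2) :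
  comp p1 i1 = idm Y1 -> comp p2 i2 = idm Y2 -> comp p1 i2 = hzero -> comp p2 i1 = hzero ->
  hadd (comp i1 p1) (comp i2 p2) = idm X -> dec Y1 -> dec Y2 -> dec X.
Proof.
move=> h11 h22 h12 h21 hs [n1 [Xs1 [j1 [q1 [l1 pj1 o1 s1]]]]] [n2 [Xs2 [j2 [q2 [l2 pj2 o2 s2]]]]].
pose Xs := fun k : 'I_(n1 + n2) => match split k with inl a => Xs1 a | inr b => Xs2 b end.
pose ik := fun k : 'I_(n1 + n2) =>
  match split k as s return Hom (match s with inl a => Xs1 a | inr b => Xs2 b end) X with
  | inl a => comp i1 (j1 a) | inr b => comp i2 (j2 b) end.
pose pk := fun k : 'I_(n1 + n2) =>
  match split k as s return Hom X (match s with inl a => Xs1 a | inr b => Xs2 b end) with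
  | inl a => comp (q1 a) p1 | inr b => comp (q2 b) p2 end.
have ipk : forall k, comp (ik k) (pk k) =
  match split k with inl a => comp i1 (comp (comp (j1 a) (q1 a)) p1)
                   | inr b => comp i2 (comp (comp (j2 b) (q2 b)) p2) end.
  by move=> k; rewrite /ik /pk; case: (split k) => a; rewrite c4.
exists (n1 + n2), Xs, ik, pk; split.
- by move=> k; rewrite /Xs; case: (split k) => a; [apply: l1|apply: l2].
- move=> k; rewrite /Xs /ik /pk; case: (split k) => a.
    by rewrite c4 h11 c1l pj1.
  by rewrite c4 h22 c1l pj2.
- move=> k l kl; rewrite /Xs /ik /pk.
  have := splitK k; have := splitK l.
  case: (split k) => a; case: (split l) => b /= el ek.
  + rewrite c4 h11 c1l o1 // => ab; apply: kl; by rewrite -ek -el ab.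
  + by rewrite c4 h12 c0l c0r.
  + by rewrite c4 h21 c0l c0r.
  + rewrite c4 h22 c1l o2 // => ab; apply: kl; by rewrite -ek -el ab.
- rewrite big_split_h.
  have -> : \big[hadd/hzero]_(k < n1) comp (ik (lshift n2 k)) (pk (lshift n2 k))
          = \big[hadd/hzero]_(k < n1) comp i1 (comp (comp (j1 k) (q1 k)) p1).
    by apply: eq_bigr => a _; rewrite ipk (unsplitK (inl a : 'I_n1 + 'I_n2)).
  have -> : \big[hadd/hzero]_(k < n2) comp (ik (rshift n1 k)) (pk (rshift n1 k))
          = \big[hadd/hzero]_(k < n2) comp i2 (comp (comp (j2 k) (q2 k)) p2).
    by apply: eq_bigr => a _; rewrite ipk (unsplitK (inr a : 'I_n1 + 'I_n2)).
  rewrite -(@big_morph _ _ (fun g : Hom Y1 Y1 => comp i1 (comp g p1)) hzero hadd hzero hadd); first last.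
  - by rewrite c0l c0r.
  - by move=> g h /=; rewrite cDl cDr.
  rewrite -(@big_morph _ _ (fun g : Hom Y2 Y2 => comp i2 (comp g p2)) hzero hadd hzero hadd); first last.
  - by rewrite c0l c0r.
  - by move=> g h /=; rewrite cDl cDr.
  by rewrite s1 s2 !c1l.
Qed.

Lemma summand_len (Y Y1 : Ob D) (i1 : Hom Y1 Y) (p1 : Hom Y Y1) m :
  comp p1 i1 = idm Y1 -> comp i1 p1 <> idm Y -> slen (@allM _ (HomMod HD Y Y)) m ->
  exists m', (m' < m)%N /\ slen (@allM _ (HomMod HD Y1 Y1)) m'.
Proof.
move=> pi1 ne hl.
pose phi := fun g : HomMod HD Y1 Y1 => (comp i1 (comp g p1) : HomMod HD Y Y).
have hphi : ishom phi.
  split => [g h|r g]; rewrite /phi /=.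
    by rewrite cDl cDr.
  by rewrite (rl_scl HD) (rl_scr HD).
have inj : forall g, phi g = mz _ -> g = mz _.
  move=> g /= E.
  have : comp p1 (comp (comp i1 (comp g p1)) i1) = g.
    by rewrite !cA pi1 c1l -cA pi1 c1r.
  by rewrite [comp i1 (comp g p1)]E c0l c0r => <-.
have [_ H] := inj_len hphi inj hl.
apply: H; exists (idm Y) => g /= E; apply: ne.
by rewrite -[comp i1 p1]c1r -E c4 pi1 c1l.
Qed.

Lemma ks_of (HF : HomFinite D) (Hsp : forall (X : Ob D) (e : Hom X X), comp e e = e -> splits e) :
  KrullSchmidt D.
Proof.
move=> X.
have [L [S c]] := @fl_chain _ (HomMod HD X X) (HF X X).
suff H : forall m (Y : Ob D), slen (@allM _ (HomMod HD Y Y)) m -> dec Y.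
  exact: (H L X (ex_intro _ S c)).
elim/ltn_ind => m IH Y hl.
case: (classic (idm Y = hzero)) => [z|nz]; first exact: dec_zero.
case: (classic (forall f : Hom Y Y, is_unit f \/ fnilp f)) => [dich|nd].
  by apply: dec_local; apply: (local_of HD).
have [f hf] : exists f : Hom Y Y, ~ (is_unit f \/ fnilp f).
  by apply: NNPP => H; apply: nd => f; apply: NNPP => hf; apply: H; exists f.
have [hu|[hn|[e [ee enz eid]]]] := @fitting _ _ HD _ _ hl f.
- by exfalso; apply: hf; left.
- by exfalso; apply: hf; right.
have [Y1 [i1 [p1 [pi1 ip1]]]] := Hsp _ _ ee.
have ee' : comp (hadd (idm Y) (hopp e)) (hadd (idm Y) (hopp e)) = hadd (idm Y) (hopp e).
  by rewrite cDl c1l cNl cDr c1r cNr ee hNr hopp0 h0r.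
have [Y2 [i2 [p2 [pi2 ip2]]]] := Hsp _ _ ee'.
have ne1 : comp i1 p1 <> idm Y by rewrite ip1.
have [m1 [lt1 hl1]] := summand_len pi1 ne1 hl.
have ne2 : comp i2 p2 <> idm Y.
  rewrite ip2 => E; apply: enz.
  have : hadd (idm Y) (hopp e) = hadd (idm Y) hzero by rewrite E h0r.
  by move/hadd_cancel => /(congr1 hopp); rewrite hoppK hopp0.
have [m2 [lt2 hl2]] := summand_len pi2 ne2 hl.
have o1 : comp e (hadd (idm Y) (hopp e)) = hzero by rewrite cDr c1r cNr ee hNr.
have o2 : comp (hadd (idm Y) (hopp e)) e = hzero by rewrite cDl c1l cNl ee hNr.
apply: (dec_sum pi1 pi2 _ _ _ (IH _ lt1 _ hl1) (IH _ lt2 _ hl2)).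
- have -> : comp p1 i2 = comp p1 (comp (comp (comp i1 p1) (comp i2 p2)) i2).
    by rewrite !cA pi1 c1l -cA pi2 c1r.
  by rewrite ip1 ip2 o1 c0l c0r.
- have -> : comp p2 i1 = comp p2 (comp (comp (comp i2 p2) (comp i1 p1)) i1).
    by rewrite !cA pi2 c1l -cA pi1 c1r.
  by rewrite ip1 ip2 o2 c0l c0r.
- by rewrite ip1 ip2 [hadd (idm Y) _]hC hKr.
Qed.

End Dec.

Theorem corollary4p3 (R : comPzRingType) (C : RCatData R) (E : ExtData C)
  (HC : IsRLinear C) (Hadd : is_additive C) (HF : HomFinite C) (HK : KrullSchmidt C)
  (HE : IsRBilinBifunctor E) :
  IsRLinear (ExtCat HC HE) /\ HomFinite (ExtCat HC HE) /\ KrullSchmidt (ExtCat HC HE).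
Proof.
split; first exact: ExtCat_lin.
split; first exact: (@ExtCat_fin _ _ _ HC HE HF).
apply: (ks_of (ExtCat_lin HC HE) (@ExtCat_fin _ _ _ HC HE HF)).
move=> X e ee; exact: (ext_split (ks_split HC Hadd HK) ee).
Qed.
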